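(* Let $\beta,\delta\in(0,1)$, $K>0$, and let $\eta_1,\eta_2\ge0$ be constants. Consider $$\frac{df}{dt}=\tfrac12 fm\beta L-\delta f-\eta_1 f^{3/2},\qquad \frac{dm}{dt}=\tfrac12 fm\beta L-\delta m-\eta_2 m^{3/2},\qquad L=1-\frac{f+m}{K}.$$ If $\beta K<2\delta$, then the trivial equilibrium $(0,0)$ is globally asymptotically stable.
   Context: $f,m$ are female and male densities, with populations considered in the region $0\le f,m$, $f+m\le K$. The model uses power-law harvesting of both females and males. *)

(* Defs.v *)
From Stdlib Require Import Reals.
Open Scope R_scope.

(* x^{3/2}, used only for x >= 0 (on the region of interest). *)
Definition pow32 (x : R) : R := x * sqrt x.

Definition Lterm (K f m : R) : R := 1 - (f + m) / K.

Definition rhs_f (beta delta eta1 K f m : R) : R :=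
  / 2 * f * m * beta * Lterm K f m - delta * f - eta1 * pow32 f.
Definition rhs_m (beta delta eta2 K f m : R) : R :=
  / 2 * f * m * beta * Lterm K f m - delta * m - eta2 * pow32 m.

Definition in_region (K f m : R) : Prop := 0 <= f /\ 0 <= m /\ f + m <= K.

Definition is_solution (beta delta eta1 eta2 K : R) (f m : R -> R) : Prop :=
  (forall t, 0 < t ->
     derivable_pt_lim f t (rhs_f beta delta eta1 K (f t) (m t)) /\
     derivable_pt_lim m t (rhs_m beta delta eta2 K (f t) (m t))) /\
  (forall eps, 0 < eps -> exists d, 0 < d /\
     forall t, 0 <= t < d -> Rabs (f t - f 0) < eps /\ Rabs (m t - m 0) < eps).

Definition GAS_origin (beta delta eta1 eta2 K : R) : Prop :=
  rhs_f beta delta eta1 K 0 0 = 0 /\ rhs_m beta delta eta2 K 0 0 = 0 /\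
  (forall eps, 0 < eps -> exists d, 0 < d /\
     forall f m : R -> R, is_solution beta delta eta1 eta2 K f m ->
       in_region K (f 0) (m 0) -> Rabs (f 0) + Rabs (m 0) < d ->
       forall t, 0 <= t -> Rabs (f t) + Rabs (m t) < eps) /\
  (forall f m : R -> R, is_solution beta delta eta1 eta2 K f m ->
     in_region K (f 0) (m 0) ->
     forall eps, 0 < eps -> exists T, forall t, T <= t ->
       Rabs (f t) + Rabs (m t) < eps).

(* Main.v *)
Require Import Defs.
From Stdlib Require Import Reals Lra Classical.
From Coquelicot Require Import Coquelicot.
Open Scope R_scope.
Definition rc (u:R->R) t := forall e, 0<e -> exists d, 0<d /\ forall s, t <= s < t+d -> Rabs (u s - u t) < e.

Lemma dcont u t l : derivable_pt_lim u t l -> forall e, 0<e -> exists d, 0<d /\ forall s, Rabs (s - t) < d -> Rabs(u s - u t) < e.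
Proof.
intros H e He.
assert (Hc : continuity_pt u t) by (apply derivable_continuous_pt; exists l; exact H).
destruct (Hc e He) as [d [Hd H']]. exists d; split; auto.
intros s Hs. destruct (Req_dec s t) as [->|Hn].
- rewrite Rminus_eq_0, Rabs_R0; auto.
- apply H'. split. split; [exact I| auto]. simpl. unfold R_dist. auto.
Qed.

Lemma drc u t l : derivable_pt_lim u t l -> rc u t.
Proof.
intros H e He. destruct (dcont u t l H e He) as [d [Hd H']]. exists d; split; auto.
intros s Hs. apply H'. rewrite Rabs_right; lra.
Qed.

Lemma dexp C x : derivable_pt_lim (fun t => exp (-C*t)) x (-C * exp(-C*x)).
Proof. apply is_derive_Reals. auto_derive; auto. ring. Qed.

Lemma negpart (u du : R->R) a b C : a < b -> 0 <= C -> rc u a ->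
  (forall t, a < t <= b -> derivable_pt_lim u t (du t)) -> 0 <= u a ->
  (forall t, a < t <= b -> u t < 0 -> C * u t <= du t) -> 0 <= u b.
Proof.
intros Hab HC Hra Hd Hua Hdu.
destruct (Rlt_or_le (u b) 0) as [Hub|]; [|auto]. exfalso.
set (E := fun s => a <= s <= b /\ 0 <= u s).
destruct (completeness E) as [T [HT1 HT2]].
{ exists b. intros x Hx. unfold E in Hx. lra. }
{ exists a. unfold E. lra. }
assert (aT : a <= T) by (apply HT1; unfold E; lra).
assert (Tb : T <= b) by (apply HT2; intros x Hx; unfold E in Hx; lra).
assert (Hneg : forall t, T < t <= b -> u t < 0).
{ intros t Ht. destruct (Rlt_or_le (u t) 0); auto.
  assert (t <= T) by (apply HT1; unfold E; lra). lra. }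
assert (HuT : 0 <= u T).
{ destruct (Req_dec T a) as [->|HTa]; auto.
  destruct (Rlt_or_le (u T) 0) as [Hlt|]; auto. exfalso.
  destruct (dcont u T (du T) (Hd T ltac:(lra)) (- u T) ltac:(lra)) as [d [Hdp Hd']].
  destruct (classic (exists x, E x /\ T - d < x)) as [[x [Ex Hx]]|Hno].
  - assert (x <= T) by (apply HT1; auto).
    unfold E in Ex. assert (Rabs (x - T) < d) by (rewrite Rabs_left1; lra).
    specialize (Hd' x H0). rewrite Rabs_lt_between in Hd'. lra.
  - assert (T <= T - d).
    { apply HT2. intros x Ex. destruct (Rle_or_lt x (T - d)); auto. exfalso; apply Hno; eauto. }
    lra. }
assert (Tb' : T < b).
{ destruct (Req_dec T b) as [->|]; lra. }
assert (HrT : rc u T).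
{ destruct (Req_dec T a) as [->|HTa]; auto. apply (drc u T (du T)). apply Hd; lra. }
set (k := exp (-C*(b-a))).
assert (Hk : 0 < k) by apply exp_pos.
destruct (HrT (- k * u b) ltac:(nra)) as [d [Hdp Hd']].
set (s := T + Rmin d (b - T) / 2).
assert (Hs1 : T < s < b).
{ unfold s. pose proof (Rmin_l d (b-T)). pose proof (Rmin_r d (b-T)).
  pose proof (Rmin_glb_lt d (b-T) 0 Hdp ltac:(lra)). lra. }
assert (Hs2 : s < T + d).
{ unfold s. pose proof (Rmin_l d (b-T)). pose proof (Rmin_glb_lt d (b-T) 0 Hdp ltac:(lra)). lra. }
specialize (Hd' s ltac:(lra)). rewrite Rabs_lt_between in Hd'.
destruct (MVT_cor2 (u * (fun t => exp (-C*t)))%F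
  (fun c => du c * exp (-C*c) + u c * (-C * exp(-C*c))) s b ltac:(lra)) as [c [Hc1 Hc2]].
{ intros c Hc. exact (derivable_pt_lim_mult u _ c _ _ (Hd c ltac:(lra)) (dexp C c)). }
unfold mult_fct in Hc1.
assert (Hw : 0 <= du c * exp (-C*c) + u c * (-C * exp(-C*c))).
{ assert (du c - C * u c >= 0) by (assert (u c < 0) by (apply Hneg; lra); specialize (Hdu c ltac:(lra) H); lra).
  pose proof (exp_pos (-C*c)). nra. }
assert (Hexp : exp (-C*b) = exp (-C*s) * exp (-C*(b-s))) by (rewrite <- exp_plus; f_equal; ring).
assert (Hk2 : k <= exp (-C*(b-s))).
{ unfold k. destruct (Req_dec C 0) as [->|]. right; f_equal; ring. left. apply exp_increasing. nra. }
pose proof (exp_pos (-C*s)). pose proof (exp_pos (-C*(b-s))).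
rewrite Hexp in Hc1.
assert (u s * exp (-C*s) <= u b * exp (-C*s) * exp (-C*(b-s))) by nra.
assert (u s <= u b * exp (-C*(b-s))).
{ apply (Rmult_le_reg_r (exp (-C*s))); auto. nra. }
nra.
Qed.

Lemma rc_comb g1 g2 g3 t : rc g1 t -> rc g2 t -> rc g3 t -> rc (fun s => g1 s - g2 s - g3 s) t.
Proof.
intros H1 H2 H3 e He.
destruct (H1 (e/3) ltac:(lra)) as [d1 [Hd1 H1']].
destruct (H2 (e/3) ltac:(lra)) as [d2 [Hd2 H2']].
destruct (H3 (e/3) ltac:(lra)) as [d3 [Hd3 H3']].
exists (Rmin d1 (Rmin d2 d3)). split.
{ apply Rmin_glb_lt; auto. apply Rmin_glb_lt; auto. }
intros s Hs. pose proof (Rmin_l d1 (Rmin d2 d3)). pose proof (Rmin_r d1 (Rmin d2 d3)).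
pose proof (Rmin_l d2 d3). pose proof (Rmin_r d2 d3).
specialize (H1' s ltac:(lra)). specialize (H2' s ltac:(lra)). specialize (H3' s ltac:(lra)).
rewrite Rabs_lt_between in *. lra.
Qed.

Lemma rc_const k t : rc (fun _ => k) t.
Proof. intros e He. exists 1. split. lra. intros. rewrite Rminus_eq_0, Rabs_R0. auto. Qed.

Lemma d_comb g1 g2 g3 t l1 l2 l3 : derivable_pt_lim g1 t l1 -> derivable_pt_lim g2 t l2 ->
  derivable_pt_lim g3 t l3 -> derivable_pt_lim (fun s => g1 s - g2 s - g3 s) t (l1 - l2 - l3).
Proof.
intros H1 H2 H3.
change (derivable_pt_lim ((g1 - g2) - g3)%F t (l1 - l2 - l3)).
apply derivable_pt_lim_minus; auto. apply derivable_pt_lim_minus; auto.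
Qed.

Lemma d_const k t : derivable_pt_lim (fun _ => k) t 0.
Proof. apply derivable_pt_lim_const. Qed.

Lemma closed_ge g T : 0 < T ->
  (forall e, 0<e -> exists d, 0<d /\ forall s, Rabs (s - T) < d -> Rabs(g s - g T) < e) ->
  (forall s, 0 <= s < T -> 0 <= g s) -> 0 <= g T.
Proof.
intros HT Hc Hs. destruct (Rlt_or_le (g T) 0) as [Hlt|]; auto. exfalso.
destruct (Hc (- g T) ltac:(lra)) as [d [Hd H']].
set (s := T - Rmin d T / 2).
pose proof (Rmin_l d T). pose proof (Rmin_r d T). pose proof (Rmin_glb_lt d T 0 Hd HT).
assert (Rabs (s - T) < d) by (unfold s; rewrite Rabs_left1; lra).
specialize (H' s H2). specialize (Hs s ltac:(unfold s; lra)).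
rewrite Rabs_lt_between in H'. lra.
Qed.

Lemma rc_sol beta delta eta1 eta2 K f m t : is_solution beta delta eta1 eta2 K f m -> 0 <= t ->
  rc f t /\ rc m t.
Proof.
intros [Hd H0] Ht. destruct (Req_dec t 0) as [->|Hn].
- split; intros e He; destruct (H0 e He) as [d [Hdp H']]; exists d; split; auto;
  intros s Hs; apply H'; lra.
- destruct (Hd t ltac:(lra)) as [Hf Hm]. split; eapply drc; eauto.
Qed.

Lemma abs_bound x y : Rabs (x - y) < 1 -> Rabs x <= Rabs y + 1.
Proof. intros H. pose proof (Rabs_triang (x - y) y). replace (x - y + y) with x in H0 by ring. lra. Qed.

Lemma local_ext beta delta K eta1 eta2 f m T :
 0<beta<1 -> 0<delta<1 -> 0<K -> 0<=eta1 -> 0<=eta2 ->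
 is_solution beta delta eta1 eta2 K f m -> 0 <= T -> in_region K (f T) (m T) ->
 exists eps, 0<eps /\ forall s, T < s < T+eps -> in_region K (f s) (m s).
Proof.
intros Hb Hdl HK He1 He2 Hsol HT [HfT [HmT HST]].
destruct (rc_sol _ _ _ _ _ _ _ T Hsol HT) as [Hrf Hrm].
destruct (Hrf 1 ltac:(lra)) as [d1 [Hd1 Hf1]].
destruct (Hrm 1 ltac:(lra)) as [d2 [Hd2 Hm1]].
set (F := Rabs (f T) + 1). set (M := Rabs (m T) + 1).
set (C := /2 * (F + M) * (1 + (F + M) / K)).
assert (HF : 0 <= F) by (unfold F; pose proof (Rabs_pos (f T)); lra).
assert (HM : 0 <= M) by (unfold M; pose proof (Rabs_pos (m T)); lra).
assert (HC : 0 <= C).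
{ unfold C. assert (0 <= (F+M)/K) by (apply Rdiv_le_0_compat; lra). nra. }
exists (Rmin d1 d2). split. apply Rmin_glb_lt; auto.
assert (Hbd : forall t, T <= t < T + Rmin d1 d2 -> Rabs (f t) <= F /\ Rabs (m t) <= M).
{ intros t Ht. pose proof (Rmin_l d1 d2). pose proof (Rmin_r d1 d2).
  split; apply abs_bound; [apply Hf1|apply Hm1]; lra. }
assert (Hcoef : forall t x, T <= t < T + Rmin d1 d2 -> Rabs x <= F + M ->
   / 2 * x * beta * Lterm K (f t) (m t) - delta <= C).
{ intros t x Ht Hx. destruct (Hbd t Ht) as [Hft Hmt].
  assert (HL : Rabs (Lterm K (f t) (m t)) <= 1 + (F + M)/K).
  { unfold Lterm. eapply Rle_trans. apply Rabs_triang. rewrite Rabs_Ropp, Rabs_R1.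
    apply Rplus_le_compat_l. unfold Rdiv. rewrite Rabs_mult, (Rabs_inv K), (Rabs_right K) by lra.
    apply Rmult_le_compat_r. left; apply Rinv_0_lt_compat; lra.
    eapply Rle_trans. apply Rabs_triang. lra. }
  pose proof (Rle_abs (x * beta * Lterm K (f t) (m t))).
  rewrite !Rabs_mult, (Rabs_right beta) in H by lra.
  assert (Rabs x * beta * Rabs (Lterm K (f t) (m t)) <= (F + M) * 1 * (1 + (F + M)/K)).
  { apply Rmult_le_compat. pose proof (Rabs_pos x); nra. apply Rabs_pos.
    apply Rmult_le_compat; try lra. apply Rabs_pos. auto. }
  unfold C. lra. }
destruct Hsol as [Hder Hsol0].
assert (Hfpos : forall s, T < s < T + Rmin d1 d2 -> 0 <= f s).
{ intros s Hs. apply (negpart f (fun t => rhs_f beta delta eta1 K (f t) (m t)) T s C); auto; try lra.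
  - intros t Ht. apply (Hder t ltac:(lra)).
  - intros t Ht Hneg. destruct (Hbd t ltac:(lra)) as [Hft Hmt].
    specialize (Hcoef t (m t) ltac:(lra) ltac:(lra)). unfold rhs_f, pow32.
    rewrite (sqrt_neg_0 (f t)) by lra. nra. }
assert (Hmpos : forall s, T < s < T + Rmin d1 d2 -> 0 <= m s).
{ intros s Hs. apply (negpart m (fun t => rhs_m beta delta eta2 K (f t) (m t)) T s C); auto; try lra.
  - intros t Ht. apply (Hder t ltac:(lra)).
  - intros t Ht Hneg. destruct (Hbd t ltac:(lra)) as [Hft Hmt].
    specialize (Hcoef t (f t) ltac:(lra) ltac:(lra)). unfold rhs_m, pow32.
    rewrite (sqrt_neg_0 (m t)) by lra. nra. }
intros s Hs. split; [apply Hfpos; auto|split; [apply Hmpos; auto|]].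
assert (0 <= K - f s - m s); [|lra].
apply (negpart (fun t => K - f t - m t)
  (fun t => 0 - rhs_f beta delta eta1 K (f t) (m t) - rhs_m beta delta eta2 K (f t) (m t)) T s 0); try lra.
- apply rc_comb; auto. apply rc_const.
- intros t Ht. destruct (Hder t ltac:(lra)). apply d_comb; auto. apply d_const.
- intros t Ht Hneg. specialize (Hfpos t ltac:(lra)). specialize (Hmpos t ltac:(lra)).
  unfold rhs_f, rhs_m, pow32.
  assert (HL : Lterm K (f t) (m t) < 0).
  { unfold Lterm. assert (1 < (f t + m t) / K); [|lra].
    apply (Rmult_lt_reg_r K); auto. unfold Rdiv. rewrite Rmult_assoc, Rinv_l by lra. lra. }
  pose proof (sqrt_pos (f t)). pose proof (sqrt_pos (m t)).
  assert (0 <= f t * m t * beta) by (apply Rmult_le_pos; [apply Rmult_le_pos|]; lra).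
  assert (0 <= eta1 * (f t * sqrt (f t))) by (apply Rmult_le_pos; [|apply Rmult_le_pos]; lra).
  assert (0 <= eta2 * (m t * sqrt (m t))) by (apply Rmult_le_pos; [|apply Rmult_le_pos]; lra).
  nra.
Qed.

Lemma d_sum3 beta delta eta1 eta2 K f m t : is_solution beta delta eta1 eta2 K f m -> 0 < t ->
  derivable_pt_lim (fun s => K - f s - m s) t
   (0 - rhs_f beta delta eta1 K (f t) (m t) - rhs_m beta delta eta2 K (f t) (m t)).
Proof. intros [Hd _] Ht. destruct (Hd t Ht). apply d_comb; auto. apply d_const. Qed.

Lemma region_inv beta delta K eta1 eta2 f m :
 0<beta<1 -> 0<delta<1 -> 0<K -> 0<=eta1 -> 0<=eta2 ->
 is_solution beta delta eta1 eta2 K f m -> in_region K (f 0) (m 0) ->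
 forall t, 0 <= t -> in_region K (f t) (m t).
Proof.
intros Hb Hdl HK He1 He2 Hsol H0 t Ht.
destruct (Req_dec t 0) as [->|Htn]; auto.
set (b := t).
set (E := fun x => 0 <= x <= b /\ forall s, 0 <= s <= x -> in_region K (f s) (m s)).
destruct (completeness E) as [T [HT1 HT2]].
{ exists b. intros x Hx. unfold E in Hx. lra. }
{ exists 0. split. unfold b; lra. intros s Hs. replace s with 0 by lra. auto. }
assert (T0 : 0 <= T) by (apply HT1; split; [unfold b; lra| intros s Hs; replace s with 0 by lra; auto]).
assert (Tb : T <= b) by (apply HT2; intros x Hx; unfold E in Hx; lra).
assert (Hbelow : forall s, 0 <= s < T -> in_region K (f s) (m s)).
{ intros s Hs. destruct (classic (exists x, E x /\ s < x)) as [[x [[_ Ex] Hx]]|Hno].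
  - apply Ex; lra.
  - assert (T <= s); [|lra]. apply HT2. intros x Ex.
    destruct (Rle_or_lt x s); auto. exfalso; apply Hno; eauto. }
assert (HPT : in_region K (f T) (m T)).
{ destruct (Req_dec T 0) as [->|HTn]; auto.
  destruct Hsol as [Hd Hs0] eqn:Hsol'.
  destruct (Hd T ltac:(lra)) as [Hf Hm].
  split; [|split].
  - apply (closed_ge f T ltac:(lra) (dcont _ _ _ Hf)). intros s Hs; apply Hbelow; auto.
  - apply (closed_ge m T ltac:(lra) (dcont _ _ _ Hm)). intros s Hs; apply Hbelow; auto.
  - assert (0 <= K - f T - m T); [|lra].
    apply (closed_ge (fun s => K - f s - m s) T ltac:(lra)
      (dcont _ _ _ (d_sum3 _ _ _ _ _ _ _ T Hsol ltac:(lra)))).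
    intros s Hs. destruct (Hbelow s Hs) as [_ [_ ?]]. lra. }
assert (HTE : forall s, 0 <= s <= T -> in_region K (f s) (m s)).
{ intros s Hs. destruct (Req_dec s T) as [->|]; auto. apply Hbelow; lra. }
destruct (Req_dec T b) as [HTb|HTb].
{ apply HTE. unfold b in *; lra. }
exfalso.
destruct (local_ext _ _ _ _ _ _ _ T Hb Hdl HK He1 He2 Hsol T0 HPT) as [eps [Heps Hext]].
set (s0 := T + Rmin eps (b - T) / 2).
pose proof (Rmin_l eps (b-T)). pose proof (Rmin_r eps (b-T)).
pose proof (Rmin_glb_lt eps (b-T) 0 Heps ltac:(lra)).
assert (s0 <= T); [|unfold s0 in *; lra].
apply HT1. split. unfold s0; lra.
intros s Hs. destruct (Rle_or_lt s T). apply HTE; lra. apply Hext. unfold s0 in Hs; lra.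
Qed.

Lemma Sprime beta delta K eta1 eta2 x y :
 0<beta<1 -> 0<delta<1 -> 0<K -> 0<=eta1 -> 0<=eta2 -> beta * K < 2 * delta ->
 in_region K x y ->
 rhs_f beta delta eta1 K x y + rhs_m beta delta eta2 K x y <= - (delta/2) * (x + y).
Proof.
intros Hb Hdl HK He1 He2 HbK [Hx [Hy HS]].
unfold rhs_f, rhs_m, pow32.
assert (HL0 : 0 <= Lterm K x y).
{ unfold Lterm. assert ((x + y) / K <= 1); [|lra].
  apply (Rmult_le_reg_r K); auto. unfold Rdiv. rewrite Rmult_assoc, Rinv_l by lra. lra. }
assert (HL1 : Lterm K x y <= 1).
{ unfold Lterm. assert (0 <= (x + y) / K) by (apply Rdiv_le_0_compat; lra). lra. }
pose proof (sqrt_pos x). pose proof (sqrt_pos y).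
assert (0 <= eta1 * (x * sqrt x)) by (apply Rmult_le_pos; [|apply Rmult_le_pos]; lra).
assert (0 <= eta2 * (y * sqrt y)) by (apply Rmult_le_pos; [|apply Rmult_le_pos]; lra).
assert (Hxy : 0 <= x * y) by nra.
assert (Q0 : 0 <= x*y*beta) by (apply Rmult_le_pos; lra).
assert (Q1 : x * y * beta * Lterm K x y <= x * y * beta) by (pose proof (Rmult_le_compat_l _ _ _ Q0 HL1); lra).
assert (Q2 : 4 * (x * y) <= K * (x + y)) by (pose proof (Rle_0_sqr (x - y)); unfold Rsqr in *; assert ((x+y)*(x+y) <= K*(x+y)) by (apply Rmult_le_compat_r; lra); lra).
assert (Q3 : beta * (K * (x + y)) <= 2 * delta * (x + y)) by nra.
nra.
Qed.

Lemma decay beta delta K eta1 eta2 f m :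
 0<beta<1 -> 0<delta<1 -> 0<K -> 0<=eta1 -> 0<=eta2 -> beta * K < 2 * delta ->
 is_solution beta delta eta1 eta2 K f m -> in_region K (f 0) (m 0) ->
 forall t, 0 <= t -> f t + m t <= (f 0 + m 0) * exp (-(delta/2) * t).
Proof.
intros Hb Hdl HK He1 He2 HbK Hsol H0 t Ht.
pose proof (region_inv _ _ _ _ _ _ _ Hb Hdl HK He1 He2 Hsol H0) as Hreg.
set (c := delta/2). set (S0 := f 0 + m 0).
assert (Hg : forall x, derivable_pt_lim (fun s => S0 * exp (-c * s)) x (S0 * (-c * exp (-c*x)))).
{ intros x. change (derivable_pt_lim (mult_real_fct S0 (fun s => exp (-c * s))) x (S0 * (-c * exp (-c*x)))).
  apply derivable_pt_lim_scal. apply dexp. }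
destruct (Req_dec t 0) as [->|Htn].
{ rewrite Rmult_0_r, exp_0. unfold S0. lra. }
assert (0 <= S0 * exp (-c * t) - f t - m t); [|lra].
apply (negpart (fun s => S0 * exp (-c * s) - f s - m s)
  (fun s => S0 * (-c * exp (-c*s)) - rhs_f beta delta eta1 K (f s) (m s) - rhs_m beta delta eta2 K (f s) (m s))
  0 t 0); try lra.
- destruct (rc_sol _ _ _ _ _ _ _ 0 Hsol ltac:(lra)). apply rc_comb; auto. eapply drc; apply Hg.
- intros s Hs. destruct Hsol as [Hd _]. destruct (Hd s ltac:(lra)). apply d_comb; auto.
- rewrite Rmult_0_r, exp_0. unfold S0. lra.
- intros s Hs Hneg. pose proof (Sprime _ _ _ _ _ _ _ Hb Hdl HK He1 He2 HbK (Hreg s ltac:(lra))).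
  fold c in H. assert (0 < c) by (unfold c; lra). nra.
Qed.

Theorem mainTheorem17 (beta delta K eta1 eta2 : R) :
  0 < beta < 1 -> 0 < delta < 1 -> 0 < K -> 0 <= eta1 -> 0 <= eta2 ->
  beta * K < 2 * delta ->
  GAS_origin beta delta eta1 eta2 K.
Proof.
intros Hb Hdl HK He1 He2 HbK.
assert (Habs : forall f m, is_solution beta delta eta1 eta2 K f m -> in_region K (f 0) (m 0) ->
  forall t, 0 <= t -> Rabs (f t) + Rabs (m t) = f t + m t).
{ intros f m Hs H0 t Ht. destruct (region_inv _ _ _ _ _ _ _ Hb Hdl HK He1 He2 Hs H0 t Ht) as [? [? ?]].
  rewrite !Rabs_right by lra. auto. }
split; [|split; [|split]].
- unfold rhs_f, pow32. rewrite sqrt_0. ring.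
- unfold rhs_m, pow32. rewrite sqrt_0. ring.
- intros eps Heps. exists eps. split; auto. intros f m Hs H0 Hd t Ht.
  rewrite Habs by auto. rewrite (Habs f m Hs H0 0) in Hd by lra.
  pose proof (decay _ _ _ _ _ _ _ Hb Hdl HK He1 He2 HbK Hs H0 t Ht).
  assert (exp (-(delta/2) * t) <= 1).
  { rewrite <- exp_0. destruct (Req_dec t 0) as [->|]. right; f_equal; ring.
    left; apply exp_increasing. nra. }
  destruct H0 as [Ha0 [Hb0 Hc0]]. nra.
- intros f m Hs H0 eps Heps.
  exists (K / (delta/2 * eps)). intros t Ht.
  assert (Ht0 : 0 <= t).
  { eapply Rle_trans; [|exact Ht]. apply Rdiv_le_0_compat. lra. nra. }
  rewrite Habs by auto.
  pose proof (decay _ _ _ _ _ _ _ Hb Hdl HK He1 He2 HbK Hs H0 t Ht0).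
  pose proof (exp_ineq1_le ((delta/2) * t)).
  assert (Hpr : exp (-(delta/2) * t) * exp ((delta/2) * t) = 1).
  { rewrite <- exp_plus. replace (-(delta/2)*t + delta/2*t) with 0 by ring. apply exp_0. }
  pose proof (exp_pos (-(delta/2) * t)).
  assert (HKt : K <= delta/2 * eps * t).
  { apply (Rmult_le_compat_l (delta/2*eps)) in Ht; [|nra].
    replace (delta / 2 * eps * (K / (delta / 2 * eps))) with K in Ht by (field; lra). lra. }
  destruct H0 as [Ha0 [Hb0 Hc0]].
  assert (f 0 + m 0 <= K) by lra.
  assert ((f 0 + m 0) * exp (-(delta/2) * t) <= K * exp (-(delta/2) * t)) by nra.
  assert (K * exp (-(delta/2) * t) < eps).
  { set (e1 := exp (-(delta/2) * t)) in *. set (e2 := exp (delta/2 * t)) in *.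
    assert (A1 : K * e1 <= delta/2 * eps * t * e1) by (apply Rmult_le_compat_r; lra).
    assert (A2 : eps * e1 * (1 + delta/2*t) <= eps * e1 * e2) by (apply Rmult_le_compat_l; [apply Rmult_le_pos|]; lra).
    assert (A3 : eps * e1 * e2 = eps) by (rewrite Rmult_assoc, Hpr; ring).
    assert (A4 : 0 < eps * e1) by (apply Rmult_lt_0_compat; lra).
    lra. }
  lra.
Qed.
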